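(* Let $g:\{0,1,2,3\}^*\to\{0,1,2,3\}^*$ be the morphism $g(0)=01$, $g(1)=20$, $g(2)=23$, $g(3)=02$, and $\tau$ the coding $\tau(0)=2$, $\tau(1)=1$, $\tau(2)=0$, $\tau(3)=1$; let $\mathbf{vtm}=\tau(g^\omega(0))$. Let $\eta:\{0,1,2\}^*\to\{0,1\}^*$ be the morphism $\eta(0)=00011101$, $\eta(1)=001110001101$, $\eta(2)=0011000111001101$. Then the infinite word $\eta(\mathbf{vtm})$ contains only three distinct squares: $0^2$, $1^2$, and $(10)^2$. It is $2$-automatic and can be generated by a $2$-automaton with $27$ states (so its weight is $2\cdot 27=54$).
   Context: A square is a nonempty word $xx$; ''containing'' means as a factor. $g^\omega(0)$ denotes the infinite fixed point of $g$ starting with $0$. A $2$-automaton (DFAO) with $s$ states generates $(a_n)_{n\ge0}$ if on input the base-$2$ representation of $n$ (most significant digit first) it outputs $a_n$; a word is $2$-automatic if some such automaton generates it; equivalently it is the image under a coding of a fixed point of a $2$-uniform morphism on $s$ letters. The weight of such a word is $2\cdot s$. *)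

(* Defs.v *)
(* Infinite words are functions nat -> nat. *)
From mathcomp Require Import all_boot.
Set Implicit Arguments. Unset Strict Implicit. Unset Printing Implicit Defensive.

Definition g (a : nat) : seq nat :=
  match a with
  | 0 => [:: 0; 1]
  | 1 => [:: 2; 0]
  | 2 => [:: 2; 3]
  | _ => [:: 0; 2]
  end.

Definition morph (h : nat -> seq nat) (w : seq nat) : seq nat := flatten (map h w).

Definition g_iter (k : nat) : seq nat := iter k (morph g) [:: 0].

(* the fixed point g^omega(0): its n-th letter is the n-th letter of g^(n+1)(0),
   a prefix of length 2^(n+1) > n of the fixed point *)
Definition g_omega (n : nat) : nat := nth 0 (g_iter n.+1) n.

Definition tau (a : nat) : nat :=
  match a with 0 => 2 | 1 => 1 | 2 => 0 | _ => 1 end.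

Definition vtm (n : nat) : nat := tau (g_omega n).

Definition eta (a : nat) : seq nat :=
  match a with
  | 0 => [:: 0;0;0;1;1;1;0;1]
  | 1 => [:: 0;0;1;1;1;0;0;0;1;1;0;1]
  | _ => [:: 0;0;1;1;0;0;0;1;1;1;0;0;1;1;0;1]
  end.

Definition pref (x : nat -> nat) (n : nat) : seq nat := mkseq x n.

(* the infinite word eta(x) for an infinite word x over {0,1,2}: the n-th
   letter is read off eta applied to the prefix of length n+1 of x
   (that image has length >= 8(n+1) > n since all eta-images are nonempty). *)
Definition morph_inf (h : nat -> seq nat) (x : nat -> nat) (n : nat) : nat :=
  nth 0 (morph h (pref x n.+1)) n.

Definition eta_vtm : nat -> nat := morph_inf eta vtm.

Definition occurs (u : seq nat) (x : nat -> nat) : Prop :=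
  exists i : nat, forall j : nat, j < size u -> x (i + j) = nth 0 u j.

Definition square_factor (u : seq nat) (x : nat -> nat) : Prop :=
  0 < size u /\ occurs (u ++ u) x.

Fixpoint bin_lsd_aux (fuel n : nat) : seq bool :=
  match fuel with
  | 0 => [::]
  | fuel'.+1 => if n == 0 then [::] else odd n :: bin_lsd_aux fuel' n./2
  end.

(* base-2 representation, most significant digit first (canonical, no
   leading zeros; 0 is represented by the empty word) *)
Definition bin_msd (n : nat) : seq bool := rev (bin_lsd_aux n n).

Record DFAO2 (s : nat) := {
  dfao_init : 'I_s;
  dfao_delta : 'I_s -> bool -> 'I_s;
  dfao_out : 'I_s -> nat
}.

Definition dfao_eval s (A : DFAO2 s) (w : seq bool) : nat :=
  dfao_out A (foldl (dfao_delta A) (dfao_init A) w).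

Definition generates s (A : DFAO2 s) (x : nat -> nat) : Prop :=
  forall n, dfao_eval A (bin_msd n) = x n.

(* Main.v *)
Require Import Defs.
From mathcomp Require Import all_boot zify.
Set Implicit Arguments. Unset Strict Implicit. Unset Printing Implicit Defensive.

Definition y := g_omega.

Lemma size_g a : size (g a) = 2.
Proof. by case: a => [|[|[|]]]. Qed.

Lemma morph_cat h s1 s2 : morph h (s1 ++ s2) = morph h s1 ++ morph h s2.
Proof. by rewrite /morph map_cat flatten_cat. Qed.

Lemma morph_rcons h s a : morph h (rcons s a) = morph h s ++ h a.
Proof. by rewrite /morph map_rcons flatten_rcons. Qed.

Lemma size_morph_g s : size (morph g s) = 2 * size s.
Proof. elim: s => [|a s IH] //=. rewrite size_cat size_g -/(morph g s) IH. lia. Qed.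

Lemma size_g_iter j : size (g_iter j) = 2 ^ j.
Proof. elim: j => [|j IH] //. change (g_iter j.+1) with (morph g (g_iter j)). by rewrite size_morph_g IH expnS. Qed.

Lemma g_iter_prefix j : exists r, g_iter j.+1 = g_iter j ++ r.
Proof.
elim: j => [|j [r IH]]; first by exists [:: 1].
exists (morph g r). change (g_iter j.+2) with (morph g (g_iter j.+1)). by rewrite {1}IH morph_cat.
Qed.

Lemma nth_g_iter_le j J k : j <= J -> k < 2 ^ j -> nth 0 (g_iter J) k = nth 0 (g_iter j) k.
Proof.
move=> hjJ hk; elim: J hjJ => [|J IH] hjJ.
  by have -> : j = 0 by lia.
case: (ltnP j J.+1) => h; last by have -> : j = J.+1 by lia.
case: (g_iter_prefix J) => r ->. rewrite nth_cat size_g_iter.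
have -> : k < 2 ^ J. apply: (leq_trans hk). by apply: leq_pexp2l.
by apply: IH.
Qed.

Lemma nth_morph_g s k c : k < size s -> c < 2 ->
  nth 0 (morph g s) (2 * k + c) = nth 0 (g (nth 0 s k)) c.
Proof.
elim: s k => [|a s IH] k //= hk hc.
rewrite -/(morph g s) nth_cat size_g. case: k hk => [|k] hk.
  by rewrite muln0 add0n hc.
have -> : 2 * k.+1 + c < 2 = false by lia.
have -> : 2 * k.+1 + c - 2 = 2 * k + c by lia.
by apply: IH.
Qed.

Lemma lt_pow2S n : n < 2 ^ n.+1.
Proof. apply: (@leq_trans (2 ^ n)); first exact: ltn_expl. by rewrite leq_pexp2l. Qed.

Lemma y_child k c : c < 2 -> y (2 * k + c) = nth 0 (g (y k)) c.
Proof.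
move=> hc. rewrite /y /g_omega.
have h1 : 2 * k + c < 2 ^ (2 * k + c).+1 by apply: lt_pow2S.
have h2 : k < 2 ^ k.+1 by apply: lt_pow2S.
have h3 : 2 ^ k.+1 <= 2 ^ (2 * k + 2) by apply: leq_pexp2l => //; lia.
rewrite -(@nth_g_iter_le (2 * k + c).+1 (2 * k + 2).+1) //; last by lia.
change (g_iter (2 * k + 2).+1) with (morph g (g_iter (2 * k + 2))).
rewrite nth_morph_g //; last by rewrite size_g_iter; lia.
rewrite (@nth_g_iter_le k.+1 (2 * k + 2)) //. lia.
Qed.

Lemma y_even k : y (2 * k) = nth 0 (g (y k)) 0.
Proof. by rewrite -(y_child k (c:=0)) ?addn0. Qed.
Lemma y_odd k : y (2 * k + 1) = nth 0 (g (y k)) 1.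
Proof. by rewrite -(y_child k (c:=1)). Qed.

Lemma y0 : y 0 = 0. Proof. by vm_compute. Qed.
Lemma y1 : y 1 = 1. Proof. by vm_compute. Qed.

Definition P2 : seq (nat * nat) := [:: (0,1); (0,2); (1,2); (2,0); (2,3); (3,0)].

Definition P2_closed : bool :=
  all (fun p => ((nth 0 (g p.1) 0, nth 0 (g p.1) 1) \in P2) &&
                ((nth 0 (g p.1) 1, nth 0 (g p.2) 0) \in P2)) P2.
Lemma P2_closedT : P2_closed = true. Proof. by vm_compute. Qed.

Lemma y_pair k : (y k, y k.+1) \in P2.
Proof.
elim: k {-2}k (leqnn k) => [|n IH] k hk.
  have -> : k = 0 by lia. by rewrite y0 y1.
case: k hk => [|k] hk; first by rewrite y0 y1.
have := allP P2_closedT _ (IH (k.+1)./2 ltac:(lia)) => /andP [hp hq].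
case: (boolP (odd k.+1)) => ho.
- have e1 : k.+1 = 2 * (k.+1)./2 + 1 by move: (odd_double_half k.+1); rewrite ho; lia.
  have e2 : k.+2 = 2 * ((k.+1)./2).+1 by lia.
  rewrite e2 y_even. rewrite {1}e1 y_odd. exact: hq.
- have e1 : k.+1 = 2 * (k.+1)./2 by move: (odd_double_half k.+1); rewrite (negbTE ho); lia.
  have e2 : k.+2 = 2 * (k.+1)./2 + 1 by lia.
  rewrite e2 y_odd {1}e1 y_even. exact: hp.
Qed.

Definition L (a : nat) : nat := size (eta (tau a)).
Definition pos (k : nat) : nat := size (morph eta (pref vtm k)).

Lemma L_pos a : 0 < L a. Proof. by case: a => [|[|[|]]]. Qed.

Lemma pref_S k : pref vtm k.+1 = rcons (pref vtm k) (vtm k).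
Proof. by rewrite /pref mkseqS. Qed.

Lemma pos_S k : pos k.+1 = pos k + L (y k).
Proof. by rewrite /pos pref_S morph_rcons size_cat. Qed.

Lemma pos0 : pos 0 = 0. Proof. by []. Qed.

Lemma pos_ge k : k <= pos k.
Proof. elim: k => [|k IH] //. rewrite pos_S. have := L_pos (y k). lia. Qed.

Lemma pos_mono k N : k <= N -> pos k <= pos N.
Proof. elim: N => [|N IH] h. by have -> : k = 0 by lia.
case: (ltnP k N.+1) => h'; last by have -> : k = N.+1 by lia.
rewrite pos_S. have := IH ltac:(lia). lia. Qed.

Lemma nth_morph_pref k o N : k < N -> o < L (y k) ->
  nth 0 (morph eta (pref vtm N)) (pos k + o) = nth 0 (eta (tau (y k))) o.
Proof.
move=> hN ho. elim: N hN => [|N IH] hN //.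
rewrite pref_S morph_rcons nth_cat -/(pos N).
case: (ltnP k N) => h.
  have := pos_mono (k:=k.+1) (N:=N) h. rewrite pos_S => h2.
  have -> : pos k + o < pos N by lia. exact: IH.
have -> : k = N by lia.
have -> : pos N + o < pos N = false by lia.
by have -> : pos N + o - pos N = o by lia.
Qed.

Lemma eta_vtm_pos k o : o < L (y k) -> eta_vtm (pos k + o) = nth 0 (eta (tau (y k))) o.
Proof.
move=> ho. rewrite /eta_vtm /morph_inf. apply: nth_morph_pref => //.
have := pos_ge k. lia.
Qed.

Definition dd (a : nat) : nat := if (a == 1) || (a == 2) then 4 else 0.

Definition P2_pos : bool :=
  all (fun p => L (nth 0 (g p.1) 0) + L (nth 0 (g p.1) 1) + dd p.2 == dd p.1 + 2 * L p.1) P2.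
Lemma P2_posT : P2_pos = true. Proof. by vm_compute. Qed.

Lemma pos_double k : pos (2 * k) + dd (y k) = 2 * pos k.
Proof.
elim: k => [|k IH]; first by rewrite y0.
have h1 : pos (2 * k.+1) = pos (2 * k + 1) + L (y (2 * k + 1)).
  by rewrite -pos_S; congr pos; lia.
have h2 : pos (2 * k + 1) = pos (2 * k) + L (y (2 * k)) by rewrite addn1 pos_S.
rewrite h1 h2 pos_S y_odd y_even.
have := eqP (allP P2_posT _ (y_pair k)). rewrite /=. lia.
Qed.

Definition D0t : seq nat := [:: 0; 2; 4; 6; 8; 10; 12; 13; 15; 17; 2; 4; 12; 15; 0; 20; 22; 0; 2; 6; 24; 6; 8; 15; 8; 13; 22].
Definition D1t : seq nat := [:: 1; 3; 5; 7; 9; 11; 7; 14; 16; 18; 19; 5; 7; 16; 18; 21; 23; 1; 3; 7; 5; 25; 14; 26; 9; 14; 23].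
Definition Ct : seq nat := [:: 0; 0; 1; 1; 0; 0; 0; 1; 1; 1; 0; 0; 1; 0; 1; 0; 0; 1; 1; 0; 1; 1; 0; 1; 1; 0; 1].

Definition dn (q : nat) (b : bool) : nat := nth 0 (if b then D1t else D0t) q.
Definition cc (q : nat) : nat := nth 0 Ct q.

Lemma dn_lt q b : dn q b < 27.
Proof.
rewrite /dn. case: (ltnP q 27) => h.
  have : all (fun i => (nth 0 D0t i < 27) && (nth 0 D1t i < 27)) (iota 0 27) by vm_compute.
  move/allP/(_ q). rewrite mem_iota => /(_ h) /andP [h0 h1]. by case: b.
by rewrite nth_default //; case: b.
Qed.

Definition zn (n : nat) : nat := foldl dn 0 (bin_msd n).

Lemma zn_lt n : zn n < 27.
Proof. rewrite /zn. case: (lastP (bin_msd n)) => [|s b] //. by rewrite foldl_rcons dn_lt. Qed.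

Lemma bin_lsd_fuel f1 f2 n : n <= f1 -> n <= f2 -> bin_lsd_aux f1 n = bin_lsd_aux f2 n.
Proof.
elim: f1 f2 n => [|f1 IH] [|f2] n h1 h2 //=.
- by have -> : n = 0 by lia.
- by have -> : n = 0 by lia.
case: eqP => // hn. congr cons. apply: IH; rewrite -divn2; lia.
Qed.

Lemma bin_msd_child m (b : bool) : 0 < 2 * m + b -> bin_msd (2 * m + b) = rcons (bin_msd m) b.
Proof.
move=> hp. rewrite /bin_msd.
have [n E] : exists n, 2 * m + b = n.+1 by exists (2 * m + b).-1; lia.
rewrite {1}E /=.
have -> : (2 * m + b == 0) = false by lia.
have -> : odd (2 * m + b) = b by rewrite oddD oddM /=; case: (b : bool).
have -> : (2 * m + b)./2 = m by rewrite -divn2; clear E hp; case: b; lia.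
rewrite rev_cons. congr (rcons (rev _) _). apply: bin_lsd_fuel; move: E hp; case: b; lia.
Qed.

Lemma zn0 : zn 0 = 0. Proof. by []. Qed.

Lemma zn_child m (b : bool) : zn (2 * m + b) = dn (zn m) b.
Proof.
case: (posnP (2 * m + b)) => h.
  have -> : m = 0 by lia. have -> : b = false by case: b h; lia. by [].
by rewrite /zn bin_msd_child // foldl_rcons.
Qed.

Lemma zn_childE M n (b : bool) : n = 2 * M + b -> dn (zn M) b = zn n.
Proof. by move=> ->; rewrite zn_child. Qed.

Definition tup := (nat * nat * nat)%type.

Definition stepT (t : tup) (b : bool) : tup :=
  let: (a, a2, o) := t in
  let o2 := dd a + 2 * o + b in
  let g0 := nth 0 (g a) 0 in let g1 := nth 0 (g a) 1 in
  let h0 := nth 0 (g a2) 0 in let h1 := nth 0 (g a2) 1 in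
  if o2 < L g0 then (g0, g1, o2)
  else if o2 - L g0 < L g1 then (g1, h0, o2 - L g0)
  else (h0, h1, o2 - L g0 - L g1).

Definition TL : seq tup := [:: (0,1,0); (0,1,1); (0,1,2); (0,1,3); (0,1,4); (0,1,5); (0,1,6); (0,1,7); (0,1,8); (0,1,9); (0,1,10); (0,1,11); (0,1,12); (0,1,13); (0,1,14); (0,1,15); (1,2,0); (1,2,1); (1,2,2); (1,2,3); (1,2,4); (1,2,5); (1,2,6); (1,2,7); (1,2,8); (1,2,9); (1,2,10); (1,2,11); (2,0,0); (2,0,1); (2,0,2); (2,0,3); (2,0,4); (2,0,5); (2,0,6); (2,0,7); (0,2,0); (0,2,1); (0,2,2); (0,2,3); (0,2,4); (0,2,5); (0,2,6); (0,2,7); (0,2,8); (0,2,9); (0,2,10); (0,2,11); (0,2,12); (0,2,13); (0,2,14); (0,2,15); (2,3,0); (2,3,1); (2,3,2); (2,3,3); (2,3,4); (2,3,5); (2,3,6); (2,3,7); (3,0,0); (3,0,1); (3,0,2); (3,0,3); (3,0,4); (3,0,5); (3,0,6); (3,0,7); (3,0,8); (3,0,9); (3,0,10); (3,0,11)].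
Definition HV : seq nat := [:: 0; 1; 2; 3; 4; 5; 6; 7; 8; 9; 10; 11; 12; 7; 13; 14; 15; 16; 17; 18; 2; 19; 4; 5; 12; 7; 13; 14; 15; 16; 0; 18; 20; 21; 22; 23; 0; 1; 2; 3; 4; 5; 6; 7; 8; 9; 10; 11; 12; 7; 13; 14; 15; 16; 0; 18; 20; 21; 22; 23; 0; 1; 2; 3; 24; 5; 6; 25; 8; 14; 15; 26].
Definition hT (t : tup) : nat := nth 0 HV (index t TL).

Definition tup_ok (t : tup) : bool :=
  let: (a, a2, o) := t in
  (o < L a) && (cc (hT t) == nth 0 (eta (tau a)) o) &&
  all (fun b => (stepT t b \in TL) && (hT (stepT t b) == dn (hT t) b)) [:: false; true].

Lemma TL_okT : all tup_ok TL = true. Proof. by vm_compute. Qed.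
Lemma t0_in : ((0, 1, 0) : tup) \in TL. Proof. by vm_compute. Qed.
Lemma hT0 : hT (0, 1, 0) = 0. Proof. by vm_compute. Qed.

Definition Holds (n : nat) (t : tup) : Prop :=
  let: (a, a2, o) := t in
  exists k, [/\ y k = a, y k.+1 = a2, n = pos k + o & o < L a].

Lemma tup_step t (b : bool) : t \in TL ->
  (stepT t b \in TL) && (hT (stepT t b) == dn (hT t) b).
Proof.
move=> hin. have := allP TL_okT _ hin. case: t hin => [[a a2] o] hin /=.
by case: b => /andP [_ /andP [h1 /andP [h2 _]]].
Qed.

Lemma tup_bound a a2 o : (a, a2, o) \in TL -> o < L a.
Proof. move=> hin. have := allP TL_okT _ hin. by case/andP => /andP []. Qed.

Lemma tup_out a a2 o : (a, a2, o) \in TL -> cc (hT (a, a2, o)) = nth 0 (eta (tau a)) o.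
Proof. move=> hin. have := allP TL_okT _ hin. by case/andP => /andP [_ /eqP]. Qed.

Lemma Holds_step n t (b : bool) : t \in TL -> Holds n t -> Holds (2 * n + b) (stepT t b).
Proof.
move=> hin. have /andP [hin' _] := tup_step b hin.
case: t hin hin' => [[a a2] o] hin hin' [k [ya ya2 hn ho]].
have hp := pos_double k. rewrite ya in hp.
have e0 : y (2 * k) = nth 0 (g a) 0 by rewrite y_even ya.
have e1 : y (2 * k).+1 = nth 0 (g a) 1 by rewrite -addn1 y_odd ya.
have e2 : y (2 * k).+2 = nth 0 (g a2) 0 by rewrite -ya2 -y_even; congr y; lia.
have e3 : y (2 * k).+3 = nth 0 (g a2) 1 by rewrite -ya2 -y_odd; congr y; lia.
have p1 : pos (2 * k).+1 = pos (2 * k) + L (nth 0 (g a) 0) by rewrite pos_S e0.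
have p2 : pos (2 * k).+2 = pos (2 * k) + L (nth 0 (g a) 0) + L (nth 0 (g a) 1)
  by rewrite pos_S p1 e1.
move: hin'. rewrite /stepT /=.
case: ifP => h1 hin'.
  exists (2 * k); split => //; lia.
case: ifP hin' => h2 hin'.
  exists (2 * k).+1; split => //; lia.
have ho' := tup_bound hin'.
exists (2 * k).+2; split => //; lia.
Qed.

Lemma Holds_all n : exists t, [/\ t \in TL, Holds n t & hT t = zn n].
Proof.
elim: n {-2}n (leqnn n) => [|N IH] n hn.
  have -> : n = 0 by lia. exists (0, 1, 0); split.
  - exact: t0_in.
  - by exists 0; rewrite y0 y1.
  - by rewrite hT0.
case: (posnP n) => hn0.
  subst n. exists (0, 1, 0); split.
  - exact: t0_in.
  - by exists 0; rewrite y0 y1.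
  - by rewrite hT0.
have [t [tin th te]] := IH (n./2) ltac:(rewrite -divn2; lia).
have en : n = 2 * n./2 + odd n by move: (odd_double_half n); lia.
exists (stepT t (odd n)).
case/andP: (tup_step (odd n) tin) => hb1 /eqP hb2.
split => //.
- rewrite {1}en. exact: Holds_step.
- by rewrite hb2 te -zn_child -en.
Qed.

Lemma gen_eq n : eta_vtm n = cc (zn n).
Proof.
have [[[a a2] o] [tin [k [ya ya2 hn ho]] te]] := Holds_all n.
by rewrite -te tup_out // hn eta_vtm_pos ya.
Qed.

Definition Aut : DFAO2 27 :=
  {| dfao_init := inord 0; dfao_delta := fun q b => inord (dn q b); dfao_out := fun q => cc q |}.

Lemma Aut_run (q : 'I_27) w : val (foldl (dfao_delta Aut) q w) = foldl dn (val q) w.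
Proof.
elim: w q => [|b w IH] q //=. rewrite IH /=. by rewrite inordK // dn_lt.
Qed.

Lemma Aut_gen : generates Aut eta_vtm.
Proof.
move=> n. rewrite /dfao_eval gen_eq /=. rewrite Aut_run /= inordK //.
Qed.

Definition mat := seq (seq bool).
Definition rel (R : mat) (a b : nat) : bool := nth false (nth [::] R a) b.
Definition preR (o1 o2 : option mat) : mat := mkseq (fun a =>
   let r1 := (if o1 is Some R then Some (nth [::] R (dn a false)) else None) in
   let r2 := (if o2 is Some R then Some (nth [::] R (dn a true)) else None) in
   mkseq (fun b =>
   (if r1 is Some r then nth false r (dn b false) else true) &&
   (if r2 is Some r then nth false r (dn b true) else true)) 27) 27.
Definition E0 : mat := mkseq (fun a => mkseq (fun b => cc a == cc b) 27) 27.
Definition St := (mat * mat * mat * nat)%type.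
Definition succ (s : St) (pl : bool) : St :=
  let: (A, E, B, dl) := s in
  let x := pl + dl + 1 in
  ((if pl then preR None (Some A) else preR (Some A) (Some E)),
   preR (Some E) (Some E),
   (if odd x then preR (Some E) (Some B) else preR (Some B) None),
   x./2).
Definition S0 : St := (E0, E0, E0, 0).
Fixpoint bfs (fuel : nat) (seen queue : seq St) : seq St :=
  match fuel with
  | 0 => seen
  | f.+1 => match queue with
            | [::] => seen
            | s :: q =>
              let s1 := succ s false in let s2 := succ s true in
              let n1 := if s1 \in seen then [::] else [:: s1] in
              let seen1 := seen ++ n1 in
              let n2 := if s2 \in seen1 then [::] else [:: s2] in
              bfs f (seen1 ++ n2) (q ++ n1 ++ n2)
            end
  end.
Definition SL := bfs 200 [:: S0] [:: S0].

Definition closed_in (l : seq St) : bool :=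
  all (fun s => [&& succ s false \in l, succ s true \in l & s.2 <= 2]) l.
Lemma S0_in : S0 \in SL. Proof. vm_cast_no_check (erefl true). Qed.
Lemma SL_closedT : closed_in SL = true. Proof. vm_cast_no_check (erefl true). Qed.
Definition expand (u : seq nat) : seq nat := flatten [seq [:: dn q false; dn q true] | q <- u].
Definition window (x W : nat) : seq nat := mkseq (fun j => zn (x + j)) W.
Definition fchild W (u : seq nat) (r : bool) : seq nat := take W (drop r (expand u)).
Definition fgrow W (F : seq (seq nat)) : seq (seq nat) :=
  undup (F ++ flatten [seq [:: fchild W u false; fchild W u true] | u <- F]).
Definition Fac W := iter 12 (fgrow W) [:: window 0 W].
Definition fclosed W (F : seq (seq nat)) : bool :=
  (window 0 W \in F) && all (fun u => (fchild W u false \in F) && (fchild W u true \in F)) F.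
Lemma Fac9T : fclosed 9 (Fac 9) = true. Proof. vm_cast_no_check (erefl true). Qed.
Lemma Fac24T : fclosed 24 (Fac 24) = true. Proof. vm_cast_no_check (erefl true). Qed.

Definition pw (E : mat) (u v : seq nat) : bool := all (fun j => rel E (nth 0 u j) (nth 0 v j)) (iota 0 (size u)).
Definition sync_chk (l : seq St) (F : seq (seq nat)) : bool :=
  let Fe := [seq fchild 9 u false | u <- F] in
  let Fo := [seq fchild 9 u true | u <- F] in
  all (fun s => let: (A, E, B, dl) := s in
     all (fun u => all (fun v => ~~ pw E u v && ~~ pw E v u) Fo) Fe) l.
Lemma syncT : sync_chk SL (Fac 9) = true. Proof. vm_cast_no_check (erefl true). Qed.

Definition cfgchk (s : St) (d : nat) (u : seq nat) : bool :=
  let: (A, E, B, dl) := s in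
  [&& rel A (nth 0 u 0) (nth 0 u d),
      all (fun j => rel E (nth 0 u j) (nth 0 u (j + d))) (iota 1 (d + dl - 2)) &
      rel B (nth 0 u (d + dl - 1)) (nth 0 u (d + dl - 1 + d))].
Definition base_chk (l : seq St) (F : seq (seq nat)) : bool :=
  all (fun s => all (fun d => all (fun u => ~~ cfgchk s d u) F) (iota 3 8)) l.
Lemma baseT : base_chk SL (Fac 24) = true. Proof. vm_cast_no_check (erefl true). Qed.
Definition small_chk (F : seq (seq nat)) : bool :=
  all (fun u => [&& cc (nth 0 u 0) < 2,
     (cc (nth 0 u 0) == cc (nth 0 u 2)) && (cc (nth 0 u 1) == cc (nth 0 u 3)) ==>
       (cc (nth 0 u 0) == 1) && (cc (nth 0 u 1) == 0) & size u == 24]) F.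
Lemma smallT : small_chk (Fac 24) = true. Proof. vm_cast_no_check (erefl true). Qed.

Lemma rel_preR o1 o2 a b : a < 27 -> b < 27 ->
  rel (preR o1 o2) a b =
  (if o1 is Some R then rel R (dn a false) (dn b false) else true) &&
  (if o2 is Some R then rel R (dn a true) (dn b true) else true).
Proof. move=> ha hb. rewrite /rel /preR nth_mkseq // nth_mkseq //. by case: o1; case: o2. Qed.

Lemma rel_E0 a b : a < 27 -> b < 27 -> rel E0 a b = (cc a == cc b).
Proof. move=> ha hb. by rewrite /rel /E0 nth_mkseq // nth_mkseq. Qed.

Lemma relE R i j i' j' : rel R (zn i') (zn j') -> i = i' -> j = j' -> rel R (zn i) (zn j).
Proof. by move=> h -> ->. Qed.

Lemma dnz M (b : bool) : dn (zn M) b = zn (2 * M + b).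
Proof. by rewrite zn_child. Qed.

Definition Config (s : St) (m d : nat) : Prop :=
  let: (A, E, B, dl) := s in
  [/\ rel A (zn m) (zn (m + d)),
      (forall j, 0 < j -> j < d + dl - 1 -> rel E (zn (m + j)) (zn (m + j + d))) &
      rel B (zn (m + (d + dl - 1))) (zn (m + (d + dl - 1) + d))].

Lemma descent s m d' : 6 <= d' -> Config s m (2 * d') -> Config (succ s (odd m)) (m./2) d'.
Proof.
case: s => [[[A E] B] dl] hd [hA hE hB].
rewrite /succ.
move: (odd_double_half m) (odd_double_half (odd m + dl + 1)).
move: hA hE hB. generalize (odd m) => pl. generalize (m./2) => m'.
generalize ((pl + dl + 1)./2) => h. generalize (odd (pl + dl + 1)) => pr.
move=> hA hE hB em ex.
have hi : forall j, 0 < j -> j < d' + h - 1 ->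
    rel (preR (Some E) (Some E)) (zn (m' + j)) (zn (m' + j + d')).
  move=> j hj1 hj2. rewrite rel_preR ?zn_lt // !dnz. apply/andP; split.
  - apply: (relE (hE (2 * (m' + j) - m) _ _)); move: em ex; case: pl; case: pr => /=; lia.
  - apply: (relE (hE (2 * (m' + j) + 1 - m) _ _)); move: em ex; case: pl; case: pr => /=; lia.
split => //.
- case: pl em ex hA hE hB => em ex hA hE hB; rewrite rel_preR ?zn_lt // !dnz /=.
  + apply: (relE hA); lia.
  + apply/andP; split; first by apply: (relE hA); lia.
    apply: (relE (hE 1 _ _)); lia.
- case: pr ex => ex; rewrite rel_preR ?zn_lt // !dnz /=.
  + apply/andP; split; last by apply: (relE hB); move: em ex; case: pl => /=; lia.
    apply: (relE (hE (2 * (m' + (d' + h - 1)) - m) _ _)); move: em ex; case: pl => /=; lia.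
  + rewrite andbT. apply: (relE hB); move: em ex; case: pl => /=; lia.
Qed.

Lemma size_expand u : size (expand u) = 2 * size u.
Proof. elim: u => [|q u IH] //=. rewrite -/(expand u) IH. lia. Qed.

Lemma nth_expand u i : i < 2 * size u -> nth 0 (expand u) i = dn (nth 0 u i./2) (odd i).
Proof.
elim: u i => [|q u IH] i //= hi.
rewrite -/(expand u).
case: i hi => [|[|i]] hi //=.
rewrite IH; last by lia.
by rewrite /= negbK.
Qed.

Lemma window_child x W : 0 < W -> window x W = fchild W (window x./2 W) (odd x).
Proof.
move=> hW. apply: (@eq_from_nth _ 0).
  rewrite /fchild size_takel ?size_mkseq //. rewrite size_drop size_expand size_mkseq. case: (odd x); lia.
move=> j. rewrite size_mkseq => hj.
rewrite /fchild nth_take // nth_drop nth_expand; last by rewrite size_mkseq; case: (odd x); lia.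
rewrite nth_mkseq // nth_mkseq; last by case: (odd x); rewrite -divn2; lia.
rewrite dnz. congr zn.
move: (odd_double_half x) (odd_double_half (odd x + j)). lia.
Qed.

Lemma window_in W F : 0 < W -> fclosed W F -> forall x, window x W \in F.
Proof.
move=> hW /andP [h0 hcl] x.
elim: x {-2}x (leqnn x) => [|N IH] x hx.
  by have -> : x = 0 by lia.
case: (posnP x) => hx0; first by rewrite hx0.
rewrite window_child //.
have /andP [h1 h2] := allP hcl _ (IH x./2 ltac:(rewrite -divn2; lia)).
by case: (odd x).
Qed.

Lemma window_par W F x : 0 < W -> fclosed W F ->
  window x W \in [seq fchild W u (odd x) | u <- F].
Proof.
move=> hW hF. rewrite window_child //. apply: map_f. exact: window_in.
Qed.

Lemma nth_window x W j : j < W -> nth 0 (window x W) j = zn (x + j).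
Proof. move=> h. by rewrite nth_mkseq. Qed.

Lemma sync_fact A E B dl u v : (A, E, B, dl) \in SL ->
  u \in [seq fchild 9 u false | u <- Fac 9] -> v \in [seq fchild 9 u true | u <- Fac 9] ->
  ~~ pw E u v && ~~ pw E v u.
Proof.
move=> hin hu hv. have := syncT. rewrite /sync_chk. cbv zeta.
move/allP/(_ _ hin). cbv beta iota. move/allP/(_ _ hu)/allP/(_ _ hv). done.
Qed.

Lemma sync s m d : s \in SL -> Config s m d -> 11 <= d -> ~~ odd d.
Proof.
case: s => [[[A E] B] dl] hin [hA hE hB] hd.
apply/negP => hod.
have hpw : pw E (window (m + 1) 9) (window (m + 1 + d) 9).
  apply/allP => j. rewrite size_mkseq mem_iota => /andP [_ hj].
  rewrite !nth_window; try lia. apply: (relE (hE (1 + j) _ _)); lia.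
have hF := Fac9T.
have hu := @window_par 9 (Fac 9) (m + 1) ltac:(lia) hF.
have hv := @window_par 9 (Fac 9) (m + 1 + d) ltac:(lia) hF.
have ep : odd (m + 1 + d) = ~~ odd (m + 1) by rewrite oddD hod addbT.
rewrite ep in hv.
case: (odd (m + 1)) hu hv => hu hv.
- have /andP [_ h] := sync_fact hin hv hu. by rewrite hpw in h.
- have /andP [h _] := sync_fact hin hu hv. by rewrite hpw in h.
Qed.

Lemma base_fact s d u : s \in SL -> d \in iota 3 8 -> u \in Fac 24 -> ~~ cfgchk s d u.
Proof.
move=> hs hd hu. have := baseT. rewrite /base_chk.
move/allP/(_ _ hs)/allP/(_ _ hd)/allP/(_ _ hu). done.
Qed.

Lemma dl_bound A E B dl : (A, E, B, dl) \in SL -> dl <= 2.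
Proof. move=> hin. have := SL_closedT. rewrite /closed_in. move/allP/(_ _ hin). by case/and3P. Qed.

Lemma succ_in s b : s \in SL -> succ s b \in SL.
Proof. move=> hin. have := SL_closedT. rewrite /closed_in. move/allP/(_ _ hin). by case: b; case/and3P. Qed.

Lemma base s m d : s \in SL -> Config s m d -> 3 <= d -> d < 11 -> False.
Proof.
case: s => [[[A E] B] dl] hin [hA hE hB] hd1 hd2.
have hdl := dl_bound hin.
have hu := window_in (ltac:(lia) : 0 < 24) Fac24T m.
have := base_fact hin (ltac:(rewrite mem_iota; lia) : d \in iota 3 8) hu.
rewrite /cfgchk. cbv beta iota.
rewrite !nth_window; try lia.
have hB' : rel B (zn (m + (d + dl - 1))) (zn (m + (d + dl - 1 + d))) by rewrite addnA.
rewrite addn0 hA hB' andbT.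
apply/negP/negPn/allP => j. rewrite mem_iota => /andP [hj1 hj2].
rewrite !nth_window; try lia. rewrite addnA. apply: hE; lia.
Qed.

Lemma noconf d : forall s m, s \in SL -> 3 <= d -> Config s m d -> False.
Proof.
elim: d {-2}d (leqnn d) => [|N IH] d hdN s m hin hd hc; first by lia.
case: (ltnP d 11) => hd11; first exact: (base hin hc).
have hev := sync hin hc hd11.
have ed : d = 2 * d./2 by move: (odd_double_half d); rewrite (negbTE hev); lia.
rewrite ed in hc.
have hc' := descent (ltac:(rewrite -divn2; lia) : 6 <= d./2) hc.
apply: (IH d./2 _ _ _ (succ_in (odd m) hin) _ hc'); rewrite -divn2; lia.
Qed.

Lemma small_fact i :
  [&& cc (zn i) < 2,
     (cc (zn i) == cc (zn (i + 2))) && (cc (zn (i + 1)) == cc (zn (i + 3))) ==>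
       (cc (zn i) == 1) && (cc (zn (i + 1)) == 0) & true].
Proof.
have hu := window_in (ltac:(lia) : 0 < 24) Fac24T i.
have := smallT. rewrite /small_chk. move/allP/(_ _ hu).
rewrite !nth_window; try lia. rewrite addn0. by case/and3P => -> -> _.
Qed.

Lemma sq_shift u : occurs (u ++ u) eta_vtm ->
  exists i, forall j, j < size u -> cc (zn (i + j)) = nth 0 u j /\ cc (zn (i + j + size u)) = nth 0 u j.
Proof.
case=> i0 hi. exists i0 => j hj. rewrite -!gen_eq.
have h1 := hi j ltac:(rewrite size_cat; lia).
have h2 := hi (j + size u) ltac:(rewrite size_cat; lia).
rewrite nth_cat hj in h1. rewrite nth_cat (_ : j + size u < size u = false) in h2; last by lia.
rewrite (_ : j + size u - size u = j) in h2; last by lia.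
by rewrite addnA in h2.
Qed.

Theorem theorem5 :
  (forall u : seq nat,
      square_factor u eta_vtm <-> u \in [:: [:: 0]; [:: 1]; [:: 1; 0]])
  /\ exists A : DFAO2 27, generates A eta_vtm.
Proof.
split; last by exists Aut; exact: Aut_gen.
move=> u; split.
- case=> hp hocc. have [i hi] := sq_shift hocc. clear hocc.
  case: (ltnP (size u) 3) => hs.
  + case: u hp hs hi => [|a [|b [|c t]]] hp hs hi.
    * by [].
    * have [h1 _] := hi 0 isT.
      have h1' : cc (zn i) = a by move: h1; rewrite addn0.
      have /and3P [hlt _ _] := small_fact i. rewrite h1' in hlt.
      clear -hlt. case: a hlt => [|[|a]] hlt; [by [] | by [] | by []].
    * have [h1 h3] := hi 0 isT. have [h2 h4] := hi 1 isT.
      have e1 : cc (zn i) = a by move: h1; rewrite addn0.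
      have e3 : cc (zn (i + 2)) = a by move: h3; rewrite addn0.
      have e2 : cc (zn (i + 1)) = b by move: h2.
      have e4 : cc (zn (i + 3)) = b by move: h4; rewrite (_ : i + 1 + 2 = i + 3) //; lia.
      have /and3P [_ himp _] := small_fact i.
      rewrite e1 e2 e3 e4 !eqxx in himp.
      move: himp => /= /andP [/eqP -> /eqP ->]. by [].
    * exfalso. move: hs. rewrite /=. lia.
  + exfalso. apply: (noconf (d := size u) (s := S0) (m := i) S0_in hs).
    have hE : forall j, j < size u -> rel E0 (zn (i + j)) (zn (i + j + size u)).
      move=> j hj. rewrite rel_E0 ?zn_lt //. have [-> ->] := hi j hj. exact: eqxx.
    split.
    * have := hE 0 ltac:(lia). by rewrite addn0.
    * move=> j hj1 hj2. apply: hE. lia.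
    * rewrite addn0. apply: (hE (size u - 1)). lia.
- rewrite !inE => /or3P [] /eqP ->; split => //.
  + exists 0 => j. rewrite gen_eq. case: j => [|[|j]] // _; vm_compute; reflexivity.
  + exists 2 => j. rewrite gen_eq. case: j => [|[|j]] // _; vm_compute; reflexivity.
  + exists 13 => j. rewrite gen_eq. case: j => [|[|[|[|j]]]] // _; vm_compute; reflexivity.
Qed.
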